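(* Let $n\ge 1$ and let $P$ be the $n\times n$ matrix with entries $P_{ij}=\frac{1}{i}$ if $j\ge n-i+1$ and $P_{ij}=0$ otherwise (so row $i$ has the value $1/i$ in its last $i$ positions and zeros elsewhere). Then the eigenvalues of $P$ are exactly $\lambda_i(P)=\frac{(-1)^{i+1}}{i}$ for $i=1,\ldots,n$.
   Context: $P$ is a row-stochastic ''anti-lower-triangular'' matrix: the first row is $(0,\dots,0,1)$, the second is $(0,\dots,0,\tfrac12,\tfrac12)$, ..., the last row is $(\tfrac1n,\dots,\tfrac1n)$. *)

(* Defs.v *)
From mathcomp Require Import all_boot all_order all_algebra.
Set Implicit Arguments. Unset Strict Implicit. Unset Printing Implicit Defensive.
Import GRing.Theory Num.Theory.
Local Open Scope ring_scope.

(* The n x n "anti-lower-triangular" row-stochastic matrix P.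
   0-based indices: with i' = i+1, j' = j+1 (1-based), P_{i'j'} = 1/i'
   iff j' >= n - i' + 1, i.e. (n <= i + j + 1)%N. *)
Definition antiP (R : numFieldType) (n : nat) : 'M[R]_n :=
  \matrix_(i < n, j < n) (if (n <= i + j + 1)%N then (i.+1%:R)^-1 else 0).

(* Main.v *)
Require Import Defs.
From mathcomp Require Import all_boot all_order all_algebra.
From mathcomp Require Import zify ring.
Import GRing.Theory Num.Theory.
Local Open Scope ring_scope.

Section Aux.
Variable R : numFieldType.

Definition fC (N d j : nat) : R :=
  if (j <= d)%N then (-1) ^+ j * ('C(N - j, d - j))%:R else 0.

Lemma key k M N d : (k < M)%N -> (k <= N)%N ->
  \sum_(j < M) ('C(k, j))%:R * fC N d j = ('C(N - k, d))%:R.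
Proof.
elim: k M N d => [|k IH] M N d hM hN.
  case: M hM => // M _.
  rewrite big_ord_recl /= bin0 mul1r big1 ?addr0.
    by rewrite /fC leq0n expr0 mul1r !subn0.
  by move=> j _; rewrite bin_small ?mul0r.
case: M hM => // M hM; case: N hN => // N hN.
have E : forall j : 'I_M, ('C(k.+1, lift ord0 j))%:R * fC N.+1 d (lift ord0 j)
   = ('C(k, j.+1))%:R * fC N.+1 d j.+1 + ('C(k, j))%:R * fC N.+1 d j.+1.
  by move=> j; rewrite lift0 binS natrD mulrDl.
rewrite big_ord_recl (eq_bigr _ (fun j _ => E j)) big_split /= addrA.
have H1 : ('C(k.+1, 0))%:R * fC N.+1 d 0 + \sum_(j < M) ('C(k, j.+1))%:R * fC N.+1 d j.+1
   = \sum_(j < M.+1) ('C(k, j))%:R * fC N.+1 d j.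
  by rewrite [RHS]big_ord_recl !bin0.
rewrite H1 IH; [|lia|lia].
rewrite subSS.
clear E H1; case: d => [|d].
  rewrite big1 ?addr0; first by rewrite !bin0.
  by move=> j _; rewrite /fC /= mulr0.
have E2 : forall j : 'I_M, ('C(k, j))%:R * fC N.+1 d.+1 j.+1 = - (('C(k, j))%:R * fC N d j).
  move=> j; rewrite /fC ltnS !subSS; case: ifP => _; last by rewrite mulr0 oppr0.
  by rewrite exprS mulN1r mulNr mulrN.
rewrite (eq_bigr _ (fun j _ => E2 j)) sumrN IH; [|lia|lia].
have hN' : (k <= N)%N by lia.
by rewrite (subSn hN') binS natrD addrK.
Qed.

Lemma hockey i d : (\sum_(k < i.+1) 'C(k, d) = 'C(i.+1, d.+1))%N.
Proof.
elim: i => [|i IH]; first by rewrite big_ord1; case: d.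
by rewrite big_ord_recr /= IH [in RHS]binS.
Qed.

Lemma sum_cut (F : nat -> R) n i : (i < n)%N ->
  \sum_(k < n) (if (k <= i)%N then F k else 0) = \sum_(k < i.+1) F k.
Proof.
elim: n => [//|n IH] hi.
rewrite big_ord_recr /=.
case: (ltngtP i n) => h.
- by rewrite IH // addr0.
- exfalso; lia.
- subst i; rewrite [RHS]big_ord_recr /=; congr (_ + _).
  by apply: eq_bigr => k _; rewrite ltnW.
Qed.

Lemma char_poly_sim n (A B U : 'M[R]_n) : A *m B = B *m U -> \det B = 1 ->
  char_poly A = char_poly U.
Proof.
move=> H dB.
have K : char_poly_mx A *m map_mx polyC B = map_mx polyC B *m char_poly_mx U.
  by rewrite /char_poly_mx mulmxBl mulmxBr -!map_mxM H scalar_mxC.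
have := congr1 determinant K.
by rewrite !det_mulmx det_map_mx dB mulr1 mul1r.
Qed.

Lemma char_poly_tr n (U : 'M[R]_n) : char_poly U^T = char_poly U.
Proof.
rewrite /char_poly -det_tr; congr (\det _); apply/matrixP => i j.
by rewrite !mxE eq_sym.
Qed.

End Aux.

Theorem proposition1 (R : numFieldType) (n : nat) (hn : (0 < n)%N) :
  char_poly (antiP R n) =
  \prod_(k < n) ('X - ((-1) ^+ k / (k.+1)%:R)%:P).
Proof.
set Bm : 'M[R]_n := \matrix_(k < n, d < n) ('C(k, d))%:R.
set Am : 'M[R]_n := \matrix_(i < n, k < n) (if (k <= i)%N then ((i.+1)%:R)^-1 else 0).
set Jm : 'M[R]_n := \matrix_(i < n, k < n) ((i + k == n.-1)%N)%:R.
set Dm : 'M[R]_n := diag_mx (\row_(d < n) ((d.+1)%:R)^-1).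
set Cm : 'M[R]_n := \matrix_(j < n, d < n) fC R n.-1 d j.
have L1 : antiP R n = Am *m Jm.
  apply/matrixP => i l; rewrite !mxE (bigD1 (rev_ord l)) //= big1 ?addr0.
    rewrite !mxE /=.
    have hl := ltn_ord l; have hi0 := ltn_ord i.
    have -> : (n - l.+1 + l == n.-1)%N by apply/eqP; lia.
    rewrite mulr1; case: ifP; case: ifP => //; lia.
  move=> k hk; rewrite !mxE.
  have -> : (k + l == n.-1)%N = false.
    have hl := ltn_ord l; have hi0 := ltn_ord i; have hk0 := ltn_ord k.
    apply/negP => /eqP h; move/eqP: hk; apply; apply: val_inj => /=; lia.
  by rewrite mulr0.
have L2 : Am *m Bm = Bm *m Dm.
  apply/matrixP => i d; rewrite mul_mx_diag !mxE.
  have -> : \sum_(k < n) Am i k * Bm k d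
      = \sum_(k < n) (if (k <= i)%N then ((i.+1)%:R)^-1 * ('C(k, d))%:R else 0).
    by apply: eq_bigr => k _; rewrite !mxE; case: ifP => _; rewrite ?mul0r.
  rewrite (@sum_cut R (fun k => ((i.+1)%:R)^-1 * ('C(k, d))%:R)) //.
  rewrite -mulr_sumr -natr_sum hockey.
  have h := congr1 (fun x => x%:R : R) (mul_bin_diag i.+1 d).
  rewrite /= !natrM in h.
  have hi : (i.+1)%:R != 0 :> R by rewrite pnatr_eq0.
  have hd : (d.+1)%:R != 0 :> R by rewrite pnatr_eq0.
  apply: (mulfI hi); rewrite mulrA divff // mul1r mulrA h.
  by rewrite mulrAC divff // mul1r.
have L3 : Jm *m Bm = Bm *m Cm.
  apply/matrixP => i d; have hi0 := ltn_ord i.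
  rewrite !mxE (bigD1 (rev_ord i)) //= big1 ?addr0.
    rewrite !mxE /=.
    have -> : (i + (n - i.+1) == n.-1)%N by apply/eqP; lia.
    rewrite mul1r.
    have -> : (n - i.+1 = n.-1 - i)%N by lia.
    rewrite -(@key R i n) //; last by lia.
    by apply: eq_bigr => j _; rewrite !mxE.
  move=> k hk; rewrite !mxE.
  have -> : (i + k == n.-1)%N = false.
    have hk0 := ltn_ord k.
    apply/negP => /eqP h; move/eqP: hk; apply; apply: val_inj => /=; lia.
  by rewrite mul0r.
have LP : antiP R n *m Bm = Bm *m (Dm *m Cm).
  by rewrite L1 -mulmxA L3 mulmxA L2 mulmxA.
have dB : \det Bm = 1.
  rewrite det_trig; last first.
    by apply/is_trig_mxP => i j hij; rewrite mxE bin_small.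
  by rewrite big1 // => i _; rewrite mxE binn.
rewrite (@char_poly_sim R _ _ _ _ LP dB) -(@char_poly_tr R) char_poly_trig; last first.
  apply/is_trig_mxP => i j hij; rewrite mxE mul_diag_mx !mxE /fC.
  by rewrite leqNgt hij mulr0.
apply: eq_bigr => k _; rewrite mxE mul_diag_mx !mxE /fC leqnn subnn bin0 mulr1.
by rewrite mulrC.
Qed.
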